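(* Let $r>1$. The Danilov fan $\Sigma(r,1)$ is obtained from the cone $\Delta(r,1)$ by successive weighted blow-ups (star subdivisions) at the rays through $p_{r-1},p_{r-2},\dots,p_1$, in this order. The Danilov fan $\Sigma(r,r-1)$ is obtained from $\Delta(r,r-1)$ by successive weighted blow-ups at the rays through $p_1,p_2,\dots,p_{r-1}$, in this order.
   Context: Notation: for integers $s$ and $t>0$, $\langle s\rangle_t$ is the least non-negative integer congruent to $s$ modulo $t$. A pair of integers $(r,a)$ is admissible if $r\ge1$, $0\le a<r$, $\gcd(r,a)=1$ (so $a=0$ only for $r=1$). For admissible $(r,a)$ put $N(r,a)=\mathbb Z^3+\mathbb Z\cdot\frac1r(1,a,r-a)\subset\mathbb Q^3$; $e_1,e_2,e_3$ is the standard basis and $\Delta(r,a)$ the cone spanned by $e_1,e_2,e_3$ (its toric variety is the singularity $\frac1r(1,a,r-a)$). Let $b$ be an inverse of $a$ modulo $r$ and $p_i=\frac1r(\langle -ib\rangle_r,r-i,i)$, $i=0,\dots,r$ (so $p_0=e_2$, $p_r=e_3$, $p_{r-a}=\frac1r(1,a,r-a)$). For $r>1$ let $(r_L,a_L)=(r-a,\langle r\rangle_{r-a})$, $(r_R,a_R)=(a,\langle -r\rangle_a)$; there are lattice isomorphisms $L:N(r_L,a_L)\to N(r,a)$, $R:N(r_R,a_R)\to N(r,a)$ with $L(e_1)=e_1$, $L(e_2)=e_2$, $L(e_3)=p_{r-a}$, $R(e_1)=e_1$, $R(e_2)=p_{r-a}$, $R(e_3)=e_3$. The Danilov fan $\Sigma(r,a)$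 is defined recursively: $\Sigma(1,0)$ is $\Delta(1,0)$ with its faces; for $r>1$, $\Sigma(r,a)$ consists of the cone spanned by $e_2,e_3,p_{r-a}$ with its faces, together with $L(\Sigma(r_L,a_L))$ and $R(\Sigma(r_R,a_R))$. The weighted blow-up of a fan at the ray through a lattice point $p$ is its star subdivision at $p$: each cone containing $p$ is replaced by the cones spanned by $p$ and the faces of that cone not containing $p$. *)

(* Defs.v *)
From HB Require Import structures.
From mathcomp Require Import all_boot all_order all_algebra.
From mathcomp Require Import boolp classical_sets.
Set Implicit Arguments. Unset Strict Implicit. Unset Printing Implicit Defensive.
Import Order.TTheory GRing.Theory Num.Theory.
Local Open Scope ring_scope.
Local Open Scope classical_set_scope.

(* Points of Q^3 (the ambient space of N(r,a) ⊗ Q) *)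
Definition vec := 'rV[rat]_3.

Definition mk3 (x y z : rat) : vec := \row_(j < 3) [:: x; y; z]`_j.

Definition e1 : vec := mk3 1 0 0.
Definition e2 : vec := mk3 0 1 0.
Definition e3 : vec := mk3 0 0 1.

Definition dot (u x : vec) : rat := \sum_(j < 3) u 0 j * x 0 j.

Definition cone (s : seq vec) : set vec :=
  [set x | exists c : 'I_(size s) -> rat,
      (forall i, 0 <= c i) /\ x = \sum_(i < size s) c i *: s`_i].

Definition is_face (sigma F : set vec) : Prop :=
  exists u : vec, (forall x, sigma x -> 0 <= dot u x) /\
                  F = sigma `&` [set x | dot u x = 0].

Definition fan_of_cone (sigma : set vec) : set (set vec) := [set F | is_face sigma F].

Definition join (p : vec) (F : set vec) : set vec :=
  [set x | exists t y, 0 <= t /\ F y /\ x = t *: p + y].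

Definition star (S : set (set vec)) (p : vec) : set (set vec) :=
  [set tau | S tau /\ ~ tau p] `|`
  [set tau | exists sigma F, [/\ S sigma, sigma p, is_face sigma F, ~ F p &
                                 tau = join p F]].

Definition fan_image (f : vec -> vec) (S : set (set vec)) : set (set vec) :=
  (fun sigma => f @` sigma) @` S.

Definition Delta : set vec := cone [:: e1; e2; e3].

(* p_{r-a} = 1/r (1, a, r-a) *)
Definition qpt (r a : nat) : vec :=
  (r%:R : rat)^-1 *: mk3 1 a%:R (r - a)%:R.

Definition Lmap (r a : nat) (x : vec) : vec :=
  x 0 0 *: e1 + x 0 1 *: e2 + x 0 2 *: qpt r a.
Definition Rmap (r a : nat) (x : vec) : vec :=
  x 0 0 *: e1 + x 0 1 *: qpt r a + x 0 2 *: e3.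

(* Danilov fan, by recursion on r (fuel n >= r suffices for admissible (r,a)). *)
Fixpoint danilov_fuel (n r a : nat) : set (set vec) :=
  match n with
  | 0 => set0
  | n'.+1 =>
    if (r <= 1)%N then fan_of_cone (cone [:: e1; e2; e3])
    else fan_of_cone (cone [:: e2; e3; qpt r a])
         `|` fan_image (Lmap r a) (danilov_fuel n' (r - a) (r %% (r - a)))
         `|` fan_image (Rmap r a) (danilov_fuel n' a ((a - r %% a) %% a))
  end.

Definition danilov (r a : nat) : set (set vec) := danilov_fuel r r a.

(* p_i = 1/r (<-ib>_r, r-i, i), b an inverse of a modulo r *)
Definition pt (r : nat) (b : int) (i : nat) : vec :=
  (r%:R : rat)^-1 *:
    mk3 ((((- (i%:Z * b)) %% r%:Z)%Z)%:~R) (r - i)%:R i%:R.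

(* Main.v *)
Require Import Defs.
From mathcomp Require Import all_boot all_order all_algebra.
From mathcomp Require Import boolp classical_sets.
From mathcomp Require Import ring lra zify.
Import Order.TTheory GRing.Theory Num.Theory.
Local Open Scope ring_scope.
Local Open Scope classical_set_scope.

Lemma ord3 (j : 'I_3) : j = 0 \/ j = 1 \/ j = 2.
Proof. case: j => [[|[|[|?]]] H]; [left|right;left|right;right|] => //; apply/val_inj => //. Qed.
Lemma dot3 u x : dot u x = u 0 0 * x 0 0 + u 0 1 * x 0 1 + u 0 2 * x 0 2.
Proof. rewrite /dot !big_ord_recl big_ord0 addr0 addrA.
have -> : (ord0 : 'I_3) = 0 by apply/val_inj.
have -> : (lift ord0 ord0 : 'I_3) = 1 by apply/val_inj.
have -> : (lift ord0 (lift ord0 ord0) : 'I_3) = 2 by apply/val_inj.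
done. Qed.
Definition ek (k : 'I_3) : vec := \row_(j < 3) (j == k)%:R.
Lemma ekE k j : ek k 0 j = (j == k)%:R. Proof. by rewrite mxE. Qed.
Lemma e1E : e1 = ek 0. Proof. apply/rowP => j; rewrite !mxE; have [->|[->|->]] := ord3 j; done. Qed.
Lemma e2E : e2 = ek 1. Proof. apply/rowP => j; rewrite !mxE; have [->|[->|->]] := ord3 j; done. Qed.
Lemma e3E : e3 = ek 2. Proof. apply/rowP => j; rewrite !mxE; have [->|[->|->]] := ord3 j; done. Qed.


Implicit Types (q u v w x y p g : vec) (t : rat) (f : vec -> vec) (sigma F : set vec) (z : 'I_3 -> bool).

Lemma dotDr u x y : dot u (x + y) = dot u x + dot u y.
Proof. rewrite !dot3 !mxE; ring. Qed.
Lemma dotZr u t x : dot u (t *: x) = t * dot u x.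
Proof. rewrite !dot3 !mxE; ring. Qed.
Lemma dotDl u v x : dot (u + v) x = dot u x + dot v x.
Proof. rewrite !dot3 !mxE; ring. Qed.
Lemma dotZl u t x : dot (t *: u) x = t * dot u x.
Proof. rewrite !dot3 !mxE; ring. Qed.
Lemma dotBr u x y : dot u (x - y) = dot u x - dot u y.
Proof. rewrite !dot3 !mxE; ring. Qed.
Lemma dot_ek k x : dot (ek k) x = x 0 k.
Proof. rewrite dot3 !mxE; have [->|[->|->]] := ord3 k => /=; ring. Qed.
Lemma dot_ekr k x : dot x (ek k) = x 0 k.
Proof. rewrite dot3 !mxE; have [->|[->|->]] := ord3 k => /=; ring. Qed.

Definition repl (k : 'I_3) (q x : vec) : vec := x + x 0 k *: (q - ek k).

Definition lin (f : vec -> vec) := forall t x y, f (t *: x + y) = t *: f x + f y.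
Definition adjL (f : vec -> vec) := forall u, exists u', forall x, dot u' (f x) = dot u x.
Definition adjR (f : vec -> vec) := forall u, exists u', forall x, dot u (f x) = dot u' x.

Lemma repl_lin k q : lin (repl k q).
Proof. move=> t x y; apply/rowP => j; rewrite /repl !mxE; move: (x 0 j) (y 0 j) (x 0 k) (y 0 k) (q 0 j) ((j==k)%:R) => a b c d e f; rewrite /=. ring. Qed.
Lemma repl_k k q x : repl k q x 0 k = x 0 k * q 0 k.
Proof. rewrite /repl !mxE eqxx /=; ring. Qed.
Lemma repl_inj k q : q 0 k != 0 -> injective (repl k q).
Proof.
move=> qk x y H.
have hk : x 0 k = y 0 k by apply: (mulIf qk); rewrite -!repl_k H.
by move: H; rewrite /repl hk => /addIr.
Qed.
Lemma dot_repl u k q x : dot u (repl k q x) = dot u x + x 0 k * dot u (q - ek k).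
Proof. by rewrite /repl dotDr dotZr. Qed.
Lemma repl_adjR k q : adjR (repl k q).
Proof.
move=> u; exists (u + dot u (q - ek k) *: ek k) => x.
by rewrite dot_repl dotDl dotZl dot_ek mulrC.
Qed.
Lemma repl_adjL k q : q 0 k != 0 -> adjL (repl k q).
Proof.
move=> qk u; exists (u + ((u 0 k - dot u q) / q 0 k) *: ek k) => x.
rewrite dot_repl (dotDl u) (dotDl u) !dotZl !dot_ek !dotBr !dot_ekr !mxE eqxx /=.
field; done.
Qed.


Definition O0 : set vec := [set x | forall i, 0 <= x 0 i].
Definition lin3 u v w x : vec := x 0 0 *: u + x 0 1 *: v + x 0 2 *: w.

Lemma sum3 (F : 'I_3 -> vec) : \sum_(i < 3) F i = F 0 + F 1 + F 2.
Proof. rewrite !big_ord_recl big_ord0 addr0 addrA.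
have -> : (ord0 : 'I_3) = 0 by apply/val_inj.
have -> : (lift ord0 ord0 : 'I_3) = 1 by apply/val_inj.
have -> : (lift ord0 (lift ord0 ord0) : 'I_3) = 2 by apply/val_inj.
done. Qed.

Lemma cone3E u v w : cone [:: u; v; w] = lin3 u v w @` O0.
Proof.
rewrite /cone; apply/seteqP; split => y /=.
- case=> c [c0 ->]; exists (\row_j c j).
    by move=> i; rewrite mxE.
  by rewrite /lin3 sum3 !mxE.
- case=> x x0 <-; exists (fun i => x 0 i); split => //.
  by rewrite sum3.
Qed.

Ltac veq := apply/rowP => j; rewrite ?mxE; have [->|[->|->]] := ord3 j; rewrite ?mxE /=; ring.

Lemma lin3_id : lin3 e1 e2 e3 = id.
Proof. apply/funext => x; rewrite /lin3; veq. Qed.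

Lemma Delta_O0 : Delta = O0.
Proof. by rewrite /Delta cone3E lin3_id image_id. Qed.

Lemma Lmap_repl r a : Lmap r a = repl 2 (qpt r a).
Proof. apply/funext => x; rewrite /Lmap /repl; veq. Qed.
Lemma Rmap_repl r a : Rmap r a = repl 1 (qpt r a).
Proof. apply/funext => x; rewrite /Rmap /repl; veq. Qed.

Lemma cone_e2e3q q : cone [:: e2; e3; q] = repl 0 q @` O0.
Proof.
rewrite cone3E; apply/seteqP; split => y /= [x x0 <-].
- exists (mk3 (x 0 2) (x 0 0) (x 0 1)).
    by move=> i; have [->|[->|->]] := ord3 i; rewrite mxE /=.
  rewrite /lin3 /repl; veq.
- exists (mk3 (x 0 1) (x 0 2) (x 0 0)).
    by move=> i; have [->|[->|->]] := ord3 i; rewrite mxE /=.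
  rewrite /lin3 /repl; veq.
Qed.

Definition Oz (z : 'I_3 -> bool) : set vec :=
  [set x | forall i, 0 <= x 0 i /\ (z i -> x 0 i = 0)].

Lemma dot_zero_iff u x : (forall i, 0 <= u 0 i) -> O0 x ->
  (dot u x = 0 <-> forall i, u 0 i * x 0 i = 0).
Proof.
move=> hu hx; rewrite dot3; split.
- have h0 := mulr_ge0 (hu 0) (hx 0).
  have h1 := mulr_ge0 (hu 1) (hx 1).
  have h2 := mulr_ge0 (hu 2) (hx 2).
  move=> hs i; have [->|[->|->]] := ord3 i; move: h0 h1 h2 hs;
  move: (u 0 0 * x 0 0) (u 0 1 * x 0 1) (u 0 2 * x 0 2) => a b c; lra.
- by move=> H; rewrite !H !addr0.
Qed.

Arguments dot_zero_iff {u x}.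

Lemma face_O0 F : is_face O0 F <-> exists z, F = Oz z.
Proof.
split.
- case=> u [hu ->].
  have hu' : forall i, 0 <= u 0 i.
    move=> i; rewrite -dot_ekr; apply: hu => j; rewrite mxE; exact: ler0n.
  exists (fun i => u 0 i != 0); apply/seteqP; split => x /=.
  + case=> hx /(dot_zero_iff hu' hx) H i; split => // /negPf ui.
    by move: (H i) => /eqP; rewrite mulf_eq0 ui /= => /eqP.
  + move=> hx; have hx0 : O0 x by move=> i; case: (hx i).
    split => //; apply/(dot_zero_iff hu' hx0) => i.
    case: (hx i) => _; case: (eqVneq (u 0 i) 0) => [->|_ ->//]; last by rewrite mulr0.
    by rewrite mul0r.
- case=> z ->; exists (\row_i (z i)%:R).
  have hu' : forall i, 0 <= (\row_i (z i)%:R : vec) 0 i.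
    by move=> i; rewrite mxE; exact: ler0n.
  split; first by move=> x hx; rewrite dot3 !mxE; apply: addr_ge0; [apply: addr_ge0|]; apply: mulr_ge0 => //; exact: ler0n.
  apply/seteqP; split => x /=.
  + move=> hx; have hx0 : O0 x by move=> i; case: (hx i).
    split => //; apply/(dot_zero_iff hu' hx0) => i; rewrite mxE.
    case: (hx i) => _; case: (z i) => h; first by rewrite h // mulr0.
    by rewrite mul0r.
  + case=> hx /(dot_zero_iff hu' hx) H i; split => // zi.
    by move: (H i); rewrite mxE zi mul1r.
Qed.

Definition zset (k : 'I_3) (z : 'I_3 -> bool) := fun i => (i == k) || z i.

Lemma repl_Oz k q z : repl k q @` Oz z = if z k then Oz z else join q (Oz (zset k z)).
Proof.
case: ifP => zk; apply/seteqP; split => y /=.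
- case=> x hx <-; have [_ /(_ zk) xk] := hx k.
  by rewrite /repl xk scale0r addr0.
- move=> hy; exists y => //; have [_ /(_ zk) yk] := hy k.
  by rewrite /repl yk scale0r addr0.
- case=> x hx <-; exists (x 0 k), (x - x 0 k *: ek k); split; [|split].
  + by case: (hx k).
  + move=> i; rewrite !mxE; case: (eqVneq i k) => [->|ik] /=.
      by rewrite mulr1 subrr; split.
    rewrite mulr0 subr0; case: (hx i) => h1 h2; split => //.
    by rewrite /zset (negPf ik).
  + rewrite /repl; veq.
- case=> t [w [t0 [hw ->]]]; exists (w + t *: ek k).
  + move=> i; rewrite !mxE; case: (eqVneq i k) => [->|ik] /=.
      have [_ ->] := hw k; last by rewrite /zset eqxx.
      by rewrite add0r mulr1 zk; split.
    rewrite mulr0 addr0; case: (hw i) => h1 h2; split => // zi.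
    by apply: h2; rewrite /zset zi orbT.
  + have [_ wk] := hw k; have {}wk : w 0 k = 0 by apply: wk; rewrite /zset eqxx.
    rewrite /repl; apply/rowP => j; rewrite !mxE eqxx wk /=; ring.
Qed.


Lemma face_sub sigma F : is_face sigma F -> F `<=` sigma.
Proof. by case=> u [_ ->] x []. Qed.

Lemma face_img1 f sigma F' : adjR f -> is_face (f @` sigma) F' ->
  is_face sigma (sigma `&` [set x | F' (f x)]) /\ F' = f @` (sigma `&` [set x | F' (f x)]).
Proof.
move=> hR [u' [hu ->]]; have [u hu'] := hR u'.
split.
- exists u; split; first by move=> x hx; rewrite -hu'; apply: hu; exists x.
  apply/seteqP; split => x /=.
  + by case=> hx [_ h]; split => //; rewrite -hu'.
  + by case=> hx h; split => //; split; [exists x | rewrite hu'].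
- apply/seteqP; split => y /=.
  + case=> [[x hx <-]] h; exists x => //.
    by split => //; split => //; exists x.
  + by case=> x [hx [h1 h2]] <-.
Qed.

Arguments face_img1 {f sigma F'}.
Lemma face_img2 f sigma F : adjL f -> is_face sigma F -> is_face (f @` sigma) (f @` F).
Proof.
move=> hL [u [hu ->]]; have [u' hu'] := hL u.
exists u'; split; first by move=> y [x hx <-]; rewrite hu'; apply: hu.
apply/seteqP; split => y /=.
- by case=> x [hx h] <-; split; [exists x | rewrite hu'].
- by case=> [[x hx <-]] h; exists x => //; split => //; rewrite -hu'.
Qed.

Arguments face_img2 {f sigma F}.
Lemma fan_of_cone_img f sigma : adjL f -> adjR f ->
  fan_of_cone (f @` sigma) = fan_image f (fan_of_cone sigma).
Proof.
move=> hL hR; apply/seteqP; split => F' /=.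
- move=> /(face_img1 hR) [h1 h2]; by exists (sigma `&` [set x | F' (f x)]).
- by case=> F hF <-; apply: face_img2.
Qed.

Lemma join_img f p F : lin f -> f @` (join p F) = join (f p) (f @` F).
Proof.
move=> hf; apply/seteqP; split => z /=.
- case=> x [t [y [t0 [hy ->]]]] <-; exists t, (f y); split; [done|split; [by exists y|by rewrite hf]].
- case=> t [y' [t0 [[y hy <-] ->]]]; exists (t *: p + y); last by rewrite hf.
  by exists t, y.
Qed.

Lemma star_img f B p : lin f -> injective f -> adjL f -> adjR f ->
  star (fan_image f B) (f p) = fan_image f (star B p).
Proof.
move=> hf finj hL hR; apply/seteqP; split => tau' /=.
- case.
  + case=> [[tau hB <-]] hn; exists tau => //; left; split => // hp; apply: hn; by exists p.
  + case=> sigma' [F' [[sigma hB <-] hp hF hnF ->]].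
    have {}hp : sigma p by case: hp => x hx /finj <-.
    have [h1 h2] := face_img1 hR hF.
    exists (join p (sigma `&` [set x | F' (f x)])).
      right; exists sigma, (sigma `&` [set x | F' (f x)]); split => //.
      by move=> [_ h]; exact: hnF h.
    by rewrite (join_img f p _ hf) -h2.
- case=> tau [[hB hn]|[sigma [F [hB hp hF hnF ->]]]] <-.
  + left; split; first by exists tau.
    by case=> x hx /finj hxp; apply: hn; rewrite -hxp.
  + right; exists (f @` sigma), (f @` F); split.
    * by exists sigma.
    * by exists p.
    * exact: face_img2.
    * by case=> x hx /finj hxp; apply: hnF; rewrite -hxp.
    * by rewrite (join_img f p _ hf).
Qed.

Lemma star_U_l (A B : set (set vec)) p : (forall tau, A tau -> ~ tau p) ->
  star (A `|` B) p = A `|` star B p.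
Proof.
move=> hA; apply/seteqP; split => tau /=.
- case=> [[[hA'|hB] hn]|[sigma [F [[hA'|hB] hp hF hnF ->]]]].
  + by left.
  + by right; left.
  + by exfalso; exact: (hA _ hA' hp).
  + by right; right; exists sigma, F.
- case=> [hA'|[[hB hn]|[sigma [F [hB hp hF hnF ->]]]]].
  + by left; split; [left | exact: hA].
  + by left; split; [right|].
  + by right; exists sigma, F; split => //; right.
Qed.

Lemma star_U_r (A B : set (set vec)) p : (forall tau, B tau -> ~ tau p) ->
  star (A `|` B) p = star A p `|` B.
Proof. by move=> hB; rewrite setUC star_U_l // setUC. Qed.


Definition posv q := forall i, 0 < q 0 i.

Lemma Oz_false : Oz (fun _ => false) = O0.
Proof. apply/seteqP; split => x /= hx i; [by case: (hx i)|by split]. Qed.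

Lemma Oz_pos z q : posv q -> Oz z q -> forall i, z i = false.
Proof. move=> hq hz i; apply/negP => zi; have [_ /(_ zi)] := hz i; move: (hq i); lra. Qed.

Arguments Oz_pos {z q}.
Lemma Oz_pos' z q i : posv q -> z i -> ~ Oz z q.
Proof. by move=> hq zi /(Oz_pos hq) /(_ i); rewrite zi. Qed.

Lemma FO_Oz z : fan_of_cone O0 (Oz z).
Proof. by apply/face_O0; exists z. Qed.

Lemma Oz_repl z q i : z i -> repl i q @` Oz z = Oz z.
Proof. by move=> zi; rewrite repl_Oz zi. Qed.

Lemma join_repl z q i : z i -> join q (Oz z) = repl i q @` Oz (fun j => (j != i) && z j).
Proof.
move=> zi; rewrite repl_Oz /= eqxx /=.
have -> : zset i (fun j => (j != i) && z j) = z; last by [].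
apply/funext => j; rewrite /zset; case: (eqVneq j i) => [->|] //=.
Qed.

Lemma star_FO q (hq : posv q) tau : star (fan_of_cone O0) q tau <->
  exists z, exists k, (k == 0 \/ k == 1 \/ k == 2) /\ tau = repl k q @` Oz z.
Proof.
split.
- case=> [[/face_O0 [z ->] hn]|[sigma [F [/face_O0 [z ->] hp hF hnF ->]]]].
  + case z0: (z 0); first by exists z, 0; split; [left|rewrite Oz_repl].
    case z1: (z 1); first by exists z, 1; split; [right;left|rewrite Oz_repl].
    case z2: (z 2); first by exists z, 2; split; [right;right|rewrite Oz_repl].
    exfalso; apply: hn => i; split; first by move: (hq i); lra.
    by have [->|[->|->]] := ord3 i; rewrite ?z0 ?z1 ?z2.
  + have zf := Oz_pos hq hp.
    have ez : z = (fun _ => false) by apply/funext => i; rewrite zf.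
    move: hF; rewrite ez Oz_false => /face_O0 [z' hF']; subst F.
    case z0: (z' 0); first by exists (fun j => (j != 0) && z' j), 0; split; [left|rewrite -join_repl].
    case z1: (z' 1); first by exists (fun j => (j != 1) && z' j), 1; split; [right;left|rewrite -join_repl].
    case z2: (z' 2); first by exists (fun j => (j != 2) && z' j), 2; split; [right;right|rewrite -join_repl].
    exfalso; apply: hnF => i; split; first by move: (hq i); lra.
    by have [->|[->|->]] := ord3 i; rewrite ?z0 ?z1 ?z2.
- case=> z [k [_ ->]]; rewrite repl_Oz; case: ifP => zk.
  + left; split; first exact: (FO_Oz z).
    exact: (@Oz_pos' z q k hq zk).
  + right; exists O0, (Oz (zset k z)); split.
    * by have := FO_Oz (fun _ => false); rewrite Oz_false.
    * by move=> i; move: (hq i); lra.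
    * by apply/face_O0; exists (zset k z).
    * by apply: (@Oz_pos' (zset k z) q k hq); rewrite /zset eqxx.
    * by [].
Qed.

Lemma lemmaA q : posv q ->
  star (fan_of_cone Delta) q =
  (fan_of_cone (cone [:: e2; e3; q]) `|` fan_image (repl 2 q) (fan_of_cone Delta))
  `|` fan_image (repl 1 q) (fan_of_cone Delta).
Proof.
move=> hq; have hq0 : q 0 0 != 0 by rewrite lt0r_neq0 ?hq.
rewrite Delta_O0 cone_e2e3q fan_of_cone_img; last exact: repl_adjR; last exact: repl_adjL.
apply/seteqP; split => tau.
- move/(star_FO _ hq) => [z [k [hk ->]]].
  have FOz := FO_Oz z.
  case: hk => [|[|]] /eqP ->; [left;left|right|left;right]; by exists (Oz z).
- move=> htau; apply/(star_FO _ hq).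
  case: htau => [[|]|] [F /face_O0 [z ->] <-]; exists z.
  + by exists 0; split => //; left.
  + by exists 2; split => //; right; right.
  + by exists 1; split => //; right; left.
Qed.


Definition avoid (X : set (set vec)) p := forall tau, X tau -> ~ tau p.

Lemma fold1 f X Y D ps : lin f -> injective f -> adjL f -> adjR f ->
  (forall p, p \in ps -> avoid X (f p) /\ avoid Y (f p)) ->
  foldl star ((X `|` fan_image f D) `|` Y) (map f ps) =
  (X `|` fan_image f (foldl star D ps)) `|` Y.
Proof.
move=> hl hi hL hR; elim: ps D => [|p ps IH] D //= hps.
have [hX hY] := hps p (mem_head _ _).
rewrite star_U_r // star_U_l // star_img // IH // => p' hp'.
by apply: hps; rewrite in_cons hp' orbT.
Qed.

Lemma fold2 f X Y D ps : lin f -> injective f -> adjL f -> adjR f ->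
  (forall p, p \in ps -> avoid X (f p) /\ avoid Y (f p)) ->
  foldl star ((X `|` Y) `|` fan_image f D) (map f ps) =
  (X `|` Y) `|` fan_image f (foldl star D ps).
Proof.
move=> hl hi hL hR; elim: ps D => [|p ps IH] D //= hps.
have [hX hY] := hps p (mem_head _ _).
rewrite star_U_l; last by move=> tau [/hX|/hY].
rewrite star_img // IH // => p' hp'.
by apply: hps; rewrite in_cons hp' orbT.
Qed.

Lemma avoid_foc sigma p : ~ sigma p -> avoid (fan_of_cone sigma) p.
Proof. by move=> hn tau /face_sub hs /hs. Qed.

Lemma avoid_img h sigma p : ~ (h @` sigma) p -> avoid (fan_image h (fan_of_cone sigma)) p.
Proof.
move=> hn tau [F /face_sub hs <-] [x hx hxp]; apply: hn; exists x => //; exact: hs.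
Qed.

Lemma notin_repl k q g p : (forall i, i != k -> g 0 i <= 0) -> dot g q <= 0 -> 0 < dot g p ->
  ~ (repl k q @` O0) p.
Proof.
move=> hg hq hp [x hx hxp]; move: hp; rewrite -hxp dot_repl dotBr dot_ekr.
have hk : dot g x - x 0 k * g 0 k <= 0.
  rewrite dot3; have [ek|[ek|ek]] := ord3 k; subst k.
  - have h1 := mulr_le0_ge0 (hg 1 isT) (hx 1); have h2 := mulr_le0_ge0 (hg 2 isT) (hx 2).
    move: h1 h2; rewrite [x 0 0 * _]mulrC.
    move: (g 0 1 * x 0 1) (g 0 2 * x 0 2) (g 0 0 * x 0 0) => a b c; lra.
  - have h1 := mulr_le0_ge0 (hg 0 isT) (hx 0); have h2 := mulr_le0_ge0 (hg 2 isT) (hx 2).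
    move: h1 h2; rewrite [x 0 1 * _]mulrC.
    move: (g 0 0 * x 0 0) (g 0 2 * x 0 2) (g 0 1 * x 0 1) => a b c; lra.
  - have h1 := mulr_le0_ge0 (hg 0 isT) (hx 0); have h2 := mulr_le0_ge0 (hg 1 isT) (hx 1).
    move: h1 h2; rewrite [x 0 2 * _]mulrC.
    move: (g 0 0 * x 0 0) (g 0 1 * x 0 1) (g 0 2 * x 0 2) => a b c; lra.
have h3 := mulr_ge0_le0 (hx k) hq.
rewrite mulrBr; move: hk h3; move: (dot g x) (x 0 k * g 0 k) (x 0 k * dot g q) => a b c.
lra.
Qed.


Definition P (r i : nat) : vec := (r%:R : rat)^-1 *: mk3 i%:R i%:R (r - i)%:R.
Definition Q (r i : nat) : vec := (r%:R : rat)^-1 *: mk3 i%:R (r - i)%:R i%:R.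

Lemma qpt_P s : qpt s 1 = P s 1.
Proof. by []. Qed.

Lemma qpt_Q s : (0 < s)%N -> qpt s (s - 1) = Q s 1.
Proof. by move=> hs; rewrite /qpt /Q subKn. Qed.

Lemma pos_P s : posv (P s.+2 1).
Proof.
move=> i; have [->|[->|->]] := ord3 i; rewrite !mxE /=; apply: mulr_gt0;
  rewrite ?invr_gt0 ?ltr0n //.
Qed.

Lemma pos_Q s : posv (Q s.+2 1).
Proof.
move=> i; have [->|[->|->]] := ord3 i; rewrite !mxE /=; apply: mulr_gt0;
  rewrite ?invr_gt0 ?ltr0n //.
Qed.

Lemma natrS' n : (n.+1)%:R = n%:R + 1 :> rat.
Proof. by rewrite -addn1 natrD. Qed.

Lemma L_P s i : (0 < s)%N -> (i <= s)%N -> repl 2 (P s.+1 1) (P s i) = P s.+1 i.+1.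
Proof.
move=> hs hi; have hs0 : (s%:R : rat) != 0 by rewrite pnatr_eq0 -lt0n.
have hs1 : (s%:R + 1 : rat) != 0 by rewrite -natrS' pnatr_eq0.
rewrite /repl /P subSS; apply/rowP => j; rewrite !mxE;
have [->|[->|->]] := ord3 j; rewrite /= ?subSS ?subn0 ?natrB // ?natrS'; field. all: try by rewrite ?hs0 ?hs1.
Qed.

Lemma R_Q s i : (0 < s)%N -> (i <= s)%N -> repl 1 (Q s.+1 1) (Q s i) = Q s.+1 i.+1.
Proof.
move=> hs hi; have hs0 : (s%:R : rat) != 0 by rewrite pnatr_eq0 -lt0n.
have hs1 : (s%:R + 1 : rat) != 0 by rewrite -natrS' pnatr_eq0.
rewrite /repl /Q subSS; apply/rowP => j; rewrite !mxE;
have [->|[->|->]] := ord3 j; rewrite /= ?subSS ?subn0 ?natrB // ?natrS'; field. all: try by rewrite ?hs0 ?hs1.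
Qed.

Lemma nat_ge0 n : 0 <= n%:R :> rat. Proof. exact: ler0n. Qed.

Ltac gcheck := move=> i'; have [->|[->|->]] := ord3 i'; rewrite //= !mxE /= ?oppr_le0 ?nat_ge0 ?lexx //.

Lemma av1X s i : (1 <= i)%N -> (i <= s)%N -> ~ (repl 0 (P s.+2 1) @` O0) (P s.+2 i.+1).
Proof.
move=> h1 h2; have hs : (s%:R + 1 + 1 : rat) != 0 by rewrite -!natrS' pnatr_eq0.
apply: (notin_repl _ _ (mk3 s.+1%:R 0 (-1))).
- gcheck.
- have -> : dot (mk3 s.+1%:R 0 (-1)) (P s.+2 1) = 0.
    rewrite dot3 !mxE /= !subSS subn0 !natrS'; field; done.
  by [].
- have -> : dot (mk3 s.+1%:R 0 (-1)) (P s.+2 i.+1) = i%:R.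
    rewrite dot3 !mxE /= !subSS natrB ?(leqW h2) // !natrS'; field; done.
  by rewrite ltr0n.
Qed.

Lemma av1Y s i : (1 <= i)%N -> (i <= s)%N -> ~ (repl 1 (P s.+2 1) @` O0) (P s.+2 i.+1).
Proof.
move=> h1 h2; have hs : (s%:R + 1 + 1 : rat) != 0 by rewrite -!natrS' pnatr_eq0.
apply: (notin_repl _ _ (mk3 0 s.+1%:R (-1))).
- gcheck.
- have -> : dot (mk3 0 s.+1%:R (-1)) (P s.+2 1) = 0.
    rewrite dot3 !mxE /= !subSS subn0 !natrS'; field; done.
  by [].
- have -> : dot (mk3 0 s.+1%:R (-1)) (P s.+2 i.+1) = i%:R.
    rewrite dot3 !mxE /= !subSS natrB ?(leqW h2) // !natrS'; field; done.
  by rewrite ltr0n.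
Qed.

Lemma av2X s i : (1 <= i)%N -> (i <= s)%N -> ~ (repl 0 (Q s.+2 1) @` O0) (Q s.+2 i.+1).
Proof.
move=> h1 h2; have hs : (s%:R + 1 + 1 : rat) != 0 by rewrite -!natrS' pnatr_eq0.
apply: (notin_repl _ _ (mk3 s.+1%:R (-1) 0)).
- gcheck.
- have -> : dot (mk3 s.+1%:R (-1) 0) (Q s.+2 1) = 0.
    rewrite dot3 !mxE /= !subSS subn0 !natrS'; field; done.
  by [].
- have -> : dot (mk3 s.+1%:R (-1) 0) (Q s.+2 i.+1) = i%:R.
    rewrite dot3 !mxE /= !subSS natrB ?(leqW h2) // !natrS'; field; done.
  by rewrite ltr0n.
Qed.

Lemma av2L s i : (1 <= i)%N -> (i <= s)%N -> ~ (repl 2 (Q s.+2 1) @` O0) (Q s.+2 i.+1).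
Proof.
move=> h1 h2; have hs : (s%:R + 1 + 1 : rat) != 0 by rewrite -!natrS' pnatr_eq0.
apply: (notin_repl _ _ (mk3 0 (-1) s.+1%:R)).
- gcheck.
- have -> : dot (mk3 0 (-1) s.+1%:R) (Q s.+2 1) = 0.
    rewrite dot3 !mxE /= !subSS subn0 !natrS'; field; done.
  by [].
- have -> : dot (mk3 0 (-1) s.+1%:R) (Q s.+2 i.+1) = i%:R.
    rewrite dot3 !mxE /= !subSS natrB ?(leqW h2) // !natrS'; field; done.
  by rewrite ltr0n.
Qed.


Lemma part1 s : danilov s.+1 1 = foldl star (fan_of_cone Delta) [seq P s.+1 i | i <- iota 1 s].
Proof.
elim: s => [|s IH]; first by [].
have eL : danilov_fuel s.+1 (s.+2 - 1) (s.+2 %% (s.+2 - 1)) = danilov s.+1 1.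
  case: s IH => [|s'] _; first by [].
  rewrite subSS subn0.
  have -> : (s'.+3 %% s'.+2 = 1)%N by rewrite -[s'.+3]/(1 + s'.+2)%N modnDr modn_small.
  by [].
have eR : danilov_fuel s.+1 1 ((1 - s.+2 %% 1) %% 1) = fan_of_cone Delta by [].
have -> : danilov s.+2 1 = (fan_of_cone (cone [:: e2; e3; qpt s.+2 1])
   `|` fan_image (Lmap s.+2 1) (danilov_fuel s.+1 (s.+2 - 1) (s.+2 %% (s.+2 - 1))))
   `|` fan_image (Rmap s.+2 1) (danilov_fuel s.+1 1 ((1 - s.+2 %% 1) %% 1)) by [].
rewrite eL eR Lmap_repl Rmap_repl qpt_P.
have -> : iota 1 s.+1 = 1%N :: iota 2 s by [].
rewrite map_cons /= (lemmaA _ (pos_P s)).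
have -> : iota 2 s = map (addn 1) (iota 1 s) by rewrite -iotaDl.
have -> : [seq P s.+2 i | i <- [seq (1 + i)%N | i <- iota 1 s]] =
          map (repl 2 (P s.+2 1)) (map (P s.+1) (iota 1 s)).
  rewrite -!map_comp; apply/eq_in_map => i; rewrite mem_iota => /andP [h1 h2] /=.
  by rewrite L_P //; lia.
have q2 : P s.+2 1 0 2 != 0 by rewrite lt0r_neq0 ?(pos_P s).
rewrite fold1 ?IH //; first exact: repl_lin; first exact: repl_inj; first exact: repl_adjL; first exact: repl_adjR.
move=> p /mapP [i]; rewrite mem_iota => /andP [h1 h2] ->.
rewrite L_P; [|lia|lia]; split.
- apply: avoid_foc; rewrite cone_e2e3q; apply: av1X; lia.
- apply: avoid_img; rewrite Delta_O0; apply: av1Y; lia.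
Qed.

Lemma qpt_Q' s : qpt s.+1 s = Q s.+1 1.
Proof. by rewrite -qpt_Q // subn1. Qed.

Lemma part2 s : danilov s.+1 s = foldl star (fan_of_cone Delta) [seq Q s.+1 i | i <- iota 1 s].
Proof.
elim: s => [|s IH]; first by [].
have eR : danilov_fuel s.+1 s.+1 ((s.+1 - s.+2 %% s.+1) %% s.+1) = danilov s.+1 s.
  case: s IH => [|s'] _; first by [].
  have -> : (s'.+3 %% s'.+2 = 1)%N by rewrite -[s'.+3]/(1 + s'.+2)%N modnDr modn_small.
  rewrite subn1 /= modn_small //.
have eL : danilov_fuel s.+1 (s.+2 - s.+1) (s.+2 %% (s.+2 - s.+1)) = fan_of_cone Delta.
  by have -> : (s.+2 - s.+1 = 1)%N by lia.
have -> : danilov s.+2 s.+1 = (fan_of_cone (cone [:: e2; e3; qpt s.+2 s.+1])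
   `|` fan_image (Lmap s.+2 s.+1) (danilov_fuel s.+1 (s.+2 - s.+1) (s.+2 %% (s.+2 - s.+1))))
   `|` fan_image (Rmap s.+2 s.+1) (danilov_fuel s.+1 s.+1 ((s.+1 - s.+2 %% s.+1) %% s.+1)) by [].
rewrite eL eR Lmap_repl Rmap_repl qpt_Q'.
have -> : iota 1 s.+1 = 1%N :: iota 2 s by [].
rewrite map_cons /= (lemmaA _ (pos_Q s)).
have -> : iota 2 s = map (addn 1) (iota 1 s) by rewrite -iotaDl.
have -> : [seq Q s.+2 i | i <- [seq (1 + i)%N | i <- iota 1 s]] =
          map (repl 1 (Q s.+2 1)) (map (Q s.+1) (iota 1 s)).
  rewrite -!map_comp; apply/eq_in_map => i; rewrite mem_iota => /andP [h1 h2] /=.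
  by rewrite R_Q //; lia.
have q1 : Q s.+2 1 0 1 != 0 by rewrite lt0r_neq0 ?(pos_Q s).
rewrite fold2 ?IH //; first exact: repl_lin; first exact: repl_inj; first exact: repl_adjL; first exact: repl_adjR.
move=> p /mapP [i]; rewrite mem_iota => /andP [h1 h2] ->.
rewrite R_Q; [|lia|lia]; split.
- apply: avoid_foc; rewrite cone_e2e3q; apply: av2X; lia.
- apply: avoid_img; rewrite Delta_O0; apply: av2L; lia.
Qed.


Lemma pt_P r b i : (1 < r)%N -> (1 * b = 1 %[mod r%:Z])%Z -> (1 <= i)%N -> (i < r)%N ->
  pt r b (r - i) = P r i.
Proof.
move=> hr hb h1 h2.
have hb1 : (b %% r%:Z)%Z = 1.
  by move: hb; rewrite mul1r => ->; rewrite modz_small //; apply/andP; split => //; rewrite ltz_nat.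
have hz : ((- ((r - i)%:Z * b)) %% r%:Z)%Z = i%:Z.
  rewrite -mulNr -modzMmr hb1 mulr1 -subzn; last exact: ltnW.
  have -> : - (r%:Z - i%:Z) = (-1) * r%:Z + i%:Z by ring.
  rewrite modzMDl modz_small //; apply/andP; split => //; rewrite ltz_nat.
rewrite /pt /P subKn; last exact: ltnW.
by rewrite hz -pmulrn.
Qed.

Lemma pt_Q r b i : (1 < r)%N -> ((r - 1)%:Z * b = 1 %[mod r%:Z])%Z -> (1 <= i)%N -> (i < r)%N ->
  pt r b i = Q r i.
Proof.
move=> hr hb h1 h2.
have hnb : ((- b) %% r%:Z)%Z = 1.
  have -> : - b = (- b) * r%:Z + (r%:Z - 1) * b by ring.
  rewrite modzMDl subzn; last exact: ltnW.
  by rewrite hb modz_small //; apply/andP; split => //; rewrite ltz_nat.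
have hz : ((- (i%:Z * b)) %% r%:Z)%Z = i%:Z.
  rewrite -mulrN -modzMmr hnb mulr1.
  rewrite modz_small //; apply/andP; split => //; rewrite ltz_nat.
rewrite /pt /Q.
by rewrite hz -pmulrn.
Qed.

Local Close Scope classical_set_scope.
Local Close Scope ring_scope.

Theorem mainTheorem2 (r : nat) : (1 < r)%N ->
  (forall b : int, (1 * b = 1 %[mod r%:Z])%Z ->
     danilov r 1 =
     foldl star (fan_of_cone Delta) [seq pt r b (r - i) | i <- iota 1 r.-1]) /\
  (forall b : int, ((r - 1)%:Z * b = 1 %[mod r%:Z])%Z ->
     danilov r (r - 1) =
     foldl star (fan_of_cone Delta) [seq pt r b i | i <- iota 1 r.-1]).
Proof.
move=> hr; split => b hb.
- have -> : [seq pt r b (r - i) | i <- iota 1 r.-1] = [seq P r i | i <- iota 1 r.-1].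
    apply/eq_in_map => i; rewrite mem_iota => /andP [h1 h2].
    apply: pt_P => //; lia.
  case: r hr hb => [|[|s]] // _ _; exact: part1.
- have -> : [seq pt r b i | i <- iota 1 r.-1] = [seq Q r i | i <- iota 1 r.-1].
    apply/eq_in_map => i; rewrite mem_iota => /andP [h1 h2].
    apply: pt_Q => //; lia.
  case: r hr hb => [|[|s]] // _ _; rewrite subn1 /=; exact: part2.
Qed.
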